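(* If $\iota$ is of odd type with patching element $\gamma$, then there exists a root $\delta\in\Lambda$ ($\delta^2=-2$) such that $\delta_{\mathbb K_\gamma}^2=-1$ and $\delta_{\mathbb E_\gamma}^2=-1$, where $\delta=\delta_{\mathbb K_\gamma}+\delta_{\mathbb E_\gamma}$ is the decomposition in $\mathbb K_\gamma^\vee\oplus\mathbb E_\gamma^\vee$.
   Context: $\Lambda=\mathbb U(2)\oplus\mathbb U\oplus\mathbb E_8(2)$ (Enriques lattice). $\iota$ is a fixed-point-free involution of $K_{\tau,\tau'}=\mathrm{Km}(E_\tau\times E_{\tau'})$ with $\mathbf K\subset H^2(K_{\tau,\tau'},\mathbb Z)_-$, $\mathbf K\cong\mathbb U(2)\oplus\mathbb U(2)$ the image of $H^1(E_\tau,\mathbb Z)\otimes H^1(E_{\tau'},\mathbb Z)$; $\alpha$ a marking with $\alpha(H^2_-)=\Lambda$; $\mathbb K_\gamma=\alpha(\mathbf K)$ and $\mathbb E_\gamma$ its orthogonal complement in $\Lambda$ ($\cong\mathbb E_8(2)$). Then $\Lambda=\mathbb Z(d_1+d_2)+\mathbb K_\gamma\oplus\mathbb E_\gamma$ with $d_1\in\mathbb K_\gamma^\vee\setminus\mathbb K_\gamma$, $d_2\in\mathbb E_\gamma^\vee\setminus\mathbb E_\gamma$; the class $\gamma=\bar d_1\in A_{\mathbb K_\gamma}=A_{\mathbf K}$ is the patching element of $\iota$, and $\iota$ is of odd type if $q_{\mathbf K}(\gamma)=1\in\mathbb Z/2$ (i.e. $d_1^2$ is odd), of even type if $q_{\mathbf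 K}(\gamma)=0$. *)

(* Defs.v *)
(* Lattice-theoretic formalization of the Enriques lattice
   Lambda = U(2) + U + E8(2) (E8 negative definite), realised as Z^12 inside Q^12
   with the Gram matrix gramL. *)
From mathcomp Require Import all_boot all_order all_algebra.
Set Implicit Arguments.
Unset Strict Implicit.
Unset Printing Implicit Defensive.
Import Order.TTheory GRing.Theory Num.Theory.
Local Open Scope ring_scope.

(* Dynkin diagram of E8 (Bourbaki numbering, 0-indexed):
   0-2, 2-3, 3-4, 4-5, 5-6, 6-7, and 1-3. *)
Definition e8_edge (a b : nat) : bool :=
  ((a, b) \in [:: (0,2); (2,3); (3,4); (4,5); (5,6); (6,7); (1,3)]%N) ||
  ((b, a) \in [:: (0,2); (2,3); (3,4); (4,5); (5,6); (6,7); (1,3)]%N).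

Definition e8_entry (a b : nat) : int :=
  if a == b then (-2)%R else if e8_edge a b then 1 else 0.

Definition gramE8_2 : 'M[int]_8 := \matrix_(i, j) (2 * e8_entry i j).

Definition gramU2U2 : 'M[int]_4 :=
  \matrix_(i, j) (if ((i < 2) && (j < 2))%N || ((2 <= i) && (2 <= j))%N then
                     (if i != j then 2 else 0) else 0).

Definition gram_entry (i j : nat) : int :=
  if ((i < 2) && (j < 2))%N then (if i != j then 2 else 0)
  else if ((2 <= i < 4) && (2 <= j < 4))%N then (if i != j then 1 else 0)
  else if ((4 <= i) && (4 <= j))%N then 2 * e8_entry (i - 4) (j - 4)
  else 0.

Definition gramL : 'M[int]_12 := \matrix_(i, j) gram_entry i j.

Definition intQ (z : int) : rat := z%:~R.

(* Vectors of Lambda (x) Q are row vectors in Q^12. *)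
Notation vecQ := 'rV[rat]_12.

Definition bf (x y : vecQ) : rat := (x *m map_mx intQ gramL *m y^T) 0 0.

Definition inLambda (x : vecQ) : Prop := forall i, x 0 i \is a Num.int.

Definition inZspan n (B : 'M[int]_(n, 12)) (x : vecQ) : Prop :=
  exists c : 'rV[int]_n, x = map_mx intQ (c *m B).
Definition inQspan n (B : 'M[int]_(n, 12)) (x : vecQ) : Prop :=
  exists c : 'rV[rat]_n, x = c *m map_mx intQ B.

Definition inDual n (B : 'M[int]_(n, 12)) (x : vecQ) : Prop :=
  inQspan B x /\ forall y, inZspan B y -> bf x y \is a Num.int.

Definition inOrthLambda n (B : 'M[int]_(n, 12)) (x : vecQ) : Prop :=
  inLambda x /\ forall y, inZspan B y -> bf x y = 0.

(* Odd type: the patching element gamma = class of d1 has q_K(gamma) = 1 in Z/2,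
   i.e. d1^2 is an odd integer. *)
Definition odd_type (d1 : vecQ) : Prop := exists m : int, bf d1 d1 = intQ (2 * m + 1).

(* Main.v *)
Require Import Defs.
From mathcomp Require Import all_boot all_order all_algebra.
From mathcomp Require Import ring lra zify.
Import Order.TTheory GRing.Theory Num.Theory.
Local Open Scope ring_scope.
Set Implicit Arguments. Unset Strict Implicit.


Definition tabKl : seq (seq int) := [:: [:: 0; 0; 0; 0]; [:: 0; 0; 0; 0]; [:: 0; 0; 0; 0]; [:: (-1); 1; 0; 0]; [:: 0; 0; 0; 0]; [:: 0; 0; 0; 0]; [:: 0; 0; 0; 0]; [:: (-1); 1; (-1); 0]; [:: 0; 0; 0; 0]; [:: 0; 0; 0; 0]; [:: 0; 0; 0; 0]; [:: (-1); 1; 0; (-1)]; [:: 0; 0; (-1); 1]; [:: (-1); 0; (-1); 1]; [:: 0; (-1); (-1); 1]; [:: 0; 0; 0; 0]].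

Definition tabEl : seq (seq int) := [:: [:: 0; 0; 0; 0; 0; 0; 0; 0]; [:: (-1); 0; 0; 0; 0; 0; 0; 0]; [:: 0; 1; 0; 0; 0; 0; 0; 0]; [:: 0; 0; 0; 0; 0; 0; 0; 0]; [:: 0; 0; (-1); 0; 0; 0; 0; 0]; [:: (-1); 0; (-1); 0; 0; 0; 0; 0]; [:: 0; 0; 0; 0; 0; 0; 0; 0]; [:: 0; 0; 0; 0; 0; 0; 0; 0]; [:: 0; 0; 0; (-1); 0; 0; 0; 0]; [:: 0; 0; 0; 0; 0; 0; 0; 0]; [:: 0; (-1); 0; (-1); 0; 0; 0; 0]; [:: 0; 0; 0; 0; 0; 0; 0; 0]; [:: 0; 0; (-1); (-1); 0; 0; 0; 0]; [:: (-1); 0; (-1); (-1); 0; 0; 0; 0]; [:: 0; (-1); (-1); (-1); 0; 0; 0; 0]; [:: (-1); (-1); (-1); (-1); 0; 0; 0; 0]; [:: 0; 0; 0; 0; (-1); 0; 0; 0]; [:: 0; 0; 0; 0; 0; 0; 0; 0]; [:: 0; 0; 0; 0; 0; 0; 0; 0]; [:: 1; 1; 2; 2; 1; 0; 0; 0]; [:: 0; 0; 0; 0; 0; 0; 0; 0]; [:: 0; 0; 0; 0; 0; 0; 0; 0]; [:: 0; 1; 1; 2; 1; 0; 0; 0]; [:: 1; 1; 1; 2; 1; 0; 0; 0]; [:: 0; 0; 0; (-1); (-1); 0; 0; 0]; [:: 0; 0; 0; 0; 0; 0; 0; 0]; [:: 0; (-1); 0; (-1); (-1); 0; 0; 0];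 [:: 0; 0; 0; 0; 0; 0; 0; 0]; [:: 0; 0; (-1); (-1); (-1); 0; 0; 0]; [:: 1; 0; 1; 1; 1; 0; 0; 0]; [:: 0; 1; 1; 1; 1; 0; 0; 0]; [:: 1; 1; 1; 1; 1; 0; 0; 0]; [:: 0; 0; 0; 0; 0; 1; 0; 0]; [:: 0; 0; 0; 0; 0; 0; 0; 0]; [:: 0; 0; 0; 0; 0; 0; 0; 0]; [:: (-1); (-1); (-2); (-2); (-2); (-1); 0; 0]; [:: 0; 0; 0; 0; 0; 0; 0; 0]; [:: 0; 0; 0; 0; 0; 0; 0; 0]; [:: 0; 1; 1; 2; 2; 1; 0; 0]; [:: 1; 1; 1; 2; 2; 1; 0; 0]; [:: 0; 0; 0; 0; 0; 0; 0; 0]; [:: (-1); (-2); (-2); (-3); (-2); (-1); 0; 0]; [:: 0; 0; 0; 0; 0; 0; 0; 0]; [:: 1; 1; 2; 3; 2; 1; 0; 0]; [:: 0; 0; 0; 0; 0; 0; 0; 0]; [:: 0; 0; 0; 0; 0; 0; 0; 0]; [:: 0; 0; 0; 0; 0; 0; 0; 0]; [:: 0; 0; 0; 0; 0; 0; 0; 0]; [:: 0; 0; 0; 0; (-1); (-1); 0; 0]; [:: 0; 0; 0; 0; 0; 0; 0; 0]; [:: 0; 0; 0; 0; 0; 0; 0; 0]; [:: 1; 1; 2; 2; 1; 1; 0; 0]; [:: 0; 0; 0; 0; 0; 0; 0; 0]; [:: 0; 0; 0; 0; 0; 0; 0; 0]; [:: 0; 1; 1; 2; 1; 1; 0; 0];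 [:: 1; 1; 1; 2; 1; 1; 0; 0]; [:: 0; 0; 0; (-1); (-1); (-1); 0; 0]; [:: 0; 0; 0; 0; 0; 0; 0; 0]; [:: 0; 1; 0; 1; 1; 1; 0; 0]; [:: 0; 0; 0; 0; 0; 0; 0; 0]; [:: 0; 0; 1; 1; 1; 1; 0; 0]; [:: 1; 0; 1; 1; 1; 1; 0; 0]; [:: 0; 1; 1; 1; 1; 1; 0; 0]; [:: 1; 1; 1; 1; 1; 1; 0; 0]; [:: 0; 0; 0; 0; 0; 0; (-1); 0]; [:: 0; 0; 0; 0; 0; 0; 0; 0]; [:: 0; 0; 0; 0; 0; 0; 0; 0]; [:: (-1); (-1); (-2); (-2); (-2); (-2); (-1); 0]; [:: 0; 0; 0; 0; 0; 0; 0; 0]; [:: 0; 0; 0; 0; 0; 0; 0; 0]; [:: 0; (-1); (-1); (-2); (-2); (-2); (-1); 0]; [:: (-1); (-1); (-1); (-2); (-2); (-2); (-1); 0]; [:: 0; 0; 0; 0; 0; 0; 0; 0]; [:: (-1); (-2); (-2); (-3); (-2); (-2); (-1); 0]; [:: 0; 0; 0; 0; 0; 0; 0; 0]; [:: (-1); (-1); (-2); (-3); (-2); (-2); (-1); 0]; [:: 0; 0; 0; 0; 0; 0; 0; 0]; [:: 0; 0; 0; 0; 0; 0; 0; 0]; [:: 0; 0; 0; 0; 0; 0; 0; 0]; [:: 0; 0; 0; 0; 0; 0; 0; 0]; [:: 0; 0; 0; 0; 0; 0; 0; 0]; [:: 1; 2; 2; 4; 3; 2; 1; 0]; [:: (-2);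 (-3); (-4); (-6); (-5); (-4); (-3); (-2)]; [:: 0; 0; 0; 0; 0; 0; 0; 0]; [:: (-2); (-2); (-3); (-4); (-3); (-2); (-1); 0]; [:: 1; 2; 3; 4; 3; 2; 1; 0]; [:: 0; 0; 0; 0; 0; 0; 0; 0]; [:: 0; 0; 0; 0; 0; 0; 0; 0]; [:: 0; 0; 0; 0; 0; 0; 0; 0]; [:: (-1); (-2); (-2); (-3); (-3); (-2); (-1); 0]; [:: 0; 0; 0; 0; 0; 0; 0; 0]; [:: 1; 1; 2; 3; 3; 2; 1; 0]; [:: 0; 0; 0; 0; 0; 0; 0; 0]; [:: 0; 0; 0; 0; 0; 0; 0; 0]; [:: 0; 0; 0; 0; 0; 0; 0; 0]; [:: 0; 0; 0; 0; 0; 0; 0; 0]; [:: 0; 0; 0; 0; 0; 1; 1; 0]; [:: 0; 0; 0; 0; 0; 0; 0; 0]; [:: 0; 0; 0; 0; 0; 0; 0; 0]; [:: (-1); (-1); (-2); (-2); (-2); (-1); (-1); 0]; [:: 0; 0; 0; 0; 0; 0; 0; 0]; [:: 0; 0; 0; 0; 0; 0; 0; 0]; [:: 0; (-1); (-1); (-2); (-2); (-1); (-1); 0]; [:: (-1); (-1); (-1); (-2); (-2); (-1); (-1); 0]; [:: 0; 0; 0; 0; 0; 0; 0; 0]; [:: 1; 2; 2; 3; 2; 1; 1; 0]; [:: 0; 0; 0; 0; 0; 0; 0; 0]; [:: 1; 1; 2; 3; 2; 1; 1; 0]; [:: 0; 0; 0; 0; 0; 0; 0; 0]; [:: 0; 0;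 0; 0; 0; 0; 0; 0]; [:: 0; 0; 0; 0; 0; 0; 0; 0]; [:: 0; 0; 0; 0; 0; 0; 0; 0]; [:: 0; 0; 0; 0; (-1); (-1); (-1); 0]; [:: 0; 0; 0; 0; 0; 0; 0; 0]; [:: 0; 0; 0; 0; 0; 0; 0; 0]; [:: (-1); (-1); (-2); (-2); (-1); (-1); (-1); 0]; [:: 0; 0; 0; 0; 0; 0; 0; 0]; [:: 0; 0; 0; 0; 0; 0; 0; 0]; [:: 0; 1; 1; 2; 1; 1; 1; 0]; [:: (-1); (-1); (-1); (-2); (-1); (-1); (-1); 0]; [:: 0; 0; 0; (-1); (-1); (-1); (-1); 0]; [:: 0; 0; 0; 0; 0; 0; 0; 0]; [:: 0; (-1); 0; (-1); (-1); (-1); (-1); 0]; [:: 0; 0; 0; 0; 0; 0; 0; 0]; [:: 0; 0; (-1); (-1); (-1); (-1); (-1); 0]; [:: 1; 0; 1; 1; 1; 1; 1; 0]; [:: 0; 1; 1; 1; 1; 1; 1; 0]; [:: (-1); (-1); (-1); (-1); (-1); (-1); (-1); 0]; [:: 0; 0; 0; 0; 0; 0; 0; 1]; [:: 0; 0; 0; 0; 0; 0; 0; 0]; [:: 0; 0; 0; 0; 0; 0; 0; 0]; [:: 1; 1; 2; 2; 2; 2; 2; 1]; [:: 0; 0; 0; 0; 0; 0; 0; 0]; [:: 0; 0; 0; 0; 0; 0; 0; 0]; [:: 0; 1; 1; 2; 2; 2; 2; 1]; [:: 1; 1; 1; 2; 2; 2; 2; 1]; [:: 0; 0; 0; 0;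 0; 0; 0; 0]; [:: 1; 2; 2; 3; 2; 2; 2; 1]; [:: 0; 0; 0; 0; 0; 0; 0; 0]; [:: 1; 1; 2; 3; 2; 2; 2; 1]; [:: 0; 0; 0; 0; 0; 0; 0; 0]; [:: 0; 0; 0; 0; 0; 0; 0; 0]; [:: 0; 0; 0; 0; 0; 0; 0; 0]; [:: 0; 0; 0; 0; 0; 0; 0; 0]; [:: 0; 0; 0; 0; 0; 0; 0; 0]; [:: (-1); (-2); (-2); (-4); (-3); (-2); (-2); (-1)]; [:: (-2); (-3); (-4); (-6); (-5); (-4); (-2); (-1)]; [:: 0; 0; 0; 0; 0; 0; 0; 0]; [:: (-2); (-2); (-3); (-4); (-3); (-2); (-2); (-1)]; [:: 1; 2; 3; 4; 3; 2; 2; 1]; [:: 0; 0; 0; 0; 0; 0; 0; 0]; [:: 0; 0; 0; 0; 0; 0; 0; 0]; [:: 0; 0; 0; 0; 0; 0; 0; 0]; [:: (-1); (-2); (-2); (-3); (-3); (-2); (-2); (-1)]; [:: 0; 0; 0; 0; 0; 0; 0; 0]; [:: (-1); (-1); (-2); (-3); (-3); (-2); (-2); (-1)]; [:: 0; 0; 0; 0; 0; 0; 0; 0]; [:: 0; 0; 0; 0; 0; 0; 0; 0]; [:: 0; 0; 0; 0; 0; 0; 0; 0]; [:: 0; 0; 0; 0; 0; 0; 0; 0]; [:: 0; 0; 0; 0; 0; 0; 0; 0]; [:: (-1); (-2); (-2); (-4); (-4); (-3); (-2); (-1)]; [:: 2; 3; 4; 6; 4; 3; 2; 1]; [:: 0;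 0; 0; 0; 0; 0; 0; 0]; [:: 2; 2; 3; 4; 4; 3; 2; 1]; [:: (-1); (-2); (-3); (-4); (-4); (-3); (-2); (-1)]; [:: 0; 0; 0; 0; 0; 0; 0; 0]; [:: 0; 0; 0; 0; 0; 0; 0; 0]; [:: 2; 2; 4; 5; 4; 3; 2; 1]; [:: 0; 0; 0; 0; 0; 0; 0; 0]; [:: 2; 3; 4; 5; 4; 3; 2; 1]; [:: 0; 0; 0; 0; 0; 0; 0; 0]; [:: (-2); (-2); (-3); (-5); (-4); (-3); (-2); (-1)]; [:: (-1); (-2); (-3); (-5); (-4); (-3); (-2); (-1)]; [:: (-2); (-3); (-3); (-5); (-4); (-3); (-2); (-1)]; [:: 1; 3; 3; 5; 4; 3; 2; 1]; [:: 0; 0; 0; 0; 0; 0; 0; 0]; [:: 1; 2; 2; 4; 3; 3; 2; 1]; [:: 2; 3; 4; 6; 5; 3; 2; 1]; [:: 0; 0; 0; 0; 0; 0; 0; 0]; [:: (-2); (-2); (-3); (-4); (-3); (-3); (-2); (-1)]; [:: (-1); (-2); (-3); (-4); (-3); (-3); (-2); (-1)]; [:: 0; 0; 0; 0; 0; 0; 0; 0]; [:: 0; 0; 0; 0; 0; 0; 0; 0]; [:: 0; 0; 0; 0; 0; 0; 0; 0]; [:: (-1); (-2); (-2); (-3); (-3); (-3); (-2); (-1)]; [:: 0; 0; 0; 0; 0; 0; 0; 0]; [:: 1; 1; 2; 3; 3; 3; 2; 1]; [:: 0; 0; 0; 0; 0; 0; 0; 0]; [:: 0; 0; 0; 0;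 0; 0; 0; 0]; [:: 0; 0; 0; 0; 0; 0; 0; 0]; [:: 0; 0; 0; 0; 0; 0; 0; 0]; [:: 0; 0; 0; 0; 0; 0; 1; 1]; [:: 0; 0; 0; 0; 0; 0; 0; 0]; [:: 0; 0; 0; 0; 0; 0; 0; 0]; [:: 1; 1; 2; 2; 2; 2; 1; 1]; [:: 0; 0; 0; 0; 0; 0; 0; 0]; [:: 0; 0; 0; 0; 0; 0; 0; 0]; [:: 0; 1; 1; 2; 2; 2; 1; 1]; [:: 1; 1; 1; 2; 2; 2; 1; 1]; [:: 0; 0; 0; 0; 0; 0; 0; 0]; [:: (-1); (-2); (-2); (-3); (-2); (-2); (-1); (-1)]; [:: 0; 0; 0; 0; 0; 0; 0; 0]; [:: 1; 1; 2; 3; 2; 2; 1; 1]; [:: 0; 0; 0; 0; 0; 0; 0; 0]; [:: 0; 0; 0; 0; 0; 0; 0; 0]; [:: 0; 0; 0; 0; 0; 0; 0; 0]; [:: 0; 0; 0; 0; 0; 0; 0; 0]; [:: 0; 0; 0; 0; 0; 0; 0; 0]; [:: 1; 2; 2; 4; 3; 2; 1; 1]; [:: (-2); (-3); (-4); (-6); (-5); (-4); (-3); (-1)]; [:: 0; 0; 0; 0; 0; 0; 0; 0]; [:: 2; 2; 3; 4; 3; 2; 1; 1]; [:: (-1); (-2); (-3); (-4); (-3); (-2); (-1); (-1)]; [:: 0; 0; 0; 0; 0; 0; 0; 0]; [:: 0; 0; 0; 0; 0; 0; 0; 0]; [:: 0; 0; 0; 0; 0; 0; 0; 0]; [:: (-1);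 (-2); (-2); (-3); (-3); (-2); (-1); (-1)]; [:: 0; 0; 0; 0; 0; 0; 0; 0]; [:: (-1); (-1); (-2); (-3); (-3); (-2); (-1); (-1)]; [:: 0; 0; 0; 0; 0; 0; 0; 0]; [:: 0; 0; 0; 0; 0; 0; 0; 0]; [:: 0; 0; 0; 0; 0; 0; 0; 0]; [:: 0; 0; 0; 0; 0; 0; 0; 0]; [:: 0; 0; 0; 0; 0; (-1); (-1); (-1)]; [:: 0; 0; 0; 0; 0; 0; 0; 0]; [:: 0; 0; 0; 0; 0; 0; 0; 0]; [:: 1; 1; 2; 2; 2; 1; 1; 1]; [:: 0; 0; 0; 0; 0; 0; 0; 0]; [:: 0; 0; 0; 0; 0; 0; 0; 0]; [:: 0; 1; 1; 2; 2; 1; 1; 1]; [:: 1; 1; 1; 2; 2; 1; 1; 1]; [:: 0; 0; 0; 0; 0; 0; 0; 0]; [:: 1; 2; 2; 3; 2; 1; 1; 1]; [:: 0; 0; 0; 0; 0; 0; 0; 0]; [:: 1; 1; 2; 3; 2; 1; 1; 1]; [:: 0; 0; 0; 0; 0; 0; 0; 0]; [:: 0; 0; 0; 0; 0; 0; 0; 0]; [:: 0; 0; 0; 0; 0; 0; 0; 0]; [:: 0; 0; 0; 0; 0; 0; 0; 0]; [:: 0; 0; 0; 0; (-1); (-1); (-1); (-1)]; [:: 0; 0; 0; 0; 0; 0; 0; 0]; [:: 0; 0; 0; 0; 0; 0; 0; 0]; [:: 1; 1; 2; 2; 1; 1; 1; 1]; [:: 0; 0; 0; 0; 0; 0; 0;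 0]; [:: 0; 0; 0; 0; 0; 0; 0; 0]; [:: 0; 1; 1; 2; 1; 1; 1; 1]; [:: 1; 1; 1; 2; 1; 1; 1; 1]; [:: 0; 0; 0; 1; 1; 1; 1; 1]; [:: 0; 0; 0; 0; 0; 0; 0; 0]; [:: 0; 1; 0; 1; 1; 1; 1; 1]; [:: 0; 0; 0; 0; 0; 0; 0; 0]; [:: 0; 0; 1; 1; 1; 1; 1; 1]; [:: (-1); 0; (-1); (-1); (-1); (-1); (-1); (-1)]; [:: 0; (-1); (-1); (-1); (-1); (-1); (-1); (-1)]; [:: 1; 1; 1; 1; 1; 1; 1; 1]].

Definition MinvL : seq (seq int) := [:: [:: (-4); (-5); (-7); (-10); (-8); (-6); (-4); (-2)]; [:: (-5); (-8); (-10); (-15); (-12); (-9); (-6); (-3)]; [:: (-7); (-10); (-14); (-20); (-16); (-12); (-8); (-4)]; [:: (-10); (-15); (-20); (-30); (-24); (-18); (-12); (-6)]; [:: (-8); (-12); (-16); (-24); (-20); (-15); (-10); (-5)]; [:: (-6); (-9); (-12); (-18); (-15); (-12); (-8); (-4)]; [:: (-4); (-6); (-8); (-12); (-10); (-8); (-6); (-3)]; [:: (-2); (-3); (-4); (-6); (-5); (-4); (-3); (-2)]].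
Definition PK (R : comRingType) (x : nat -> R) : R := x 0%N * x 1%N + x 2%N * x 3%N.
Definition PE (R : comRingType) (x : nat -> R) : R :=
  - (x 0%N * x 0%N + x 1%N * x 1%N + x 2%N * x 2%N + x 3%N * x 3%N + x 4%N * x 4%N
     + x 5%N * x 5%N + x 6%N * x 6%N + x 7%N * x 7%N)
  + x 0%N * x 2%N + x 2%N * x 3%N + x 3%N * x 4%N + x 4%N * x 5%N + x 5%N * x 6%N
  + x 6%N * x 7%N + x 1%N * x 3%N.
Definition bz (b : bool) : int := if b then 1 else 0.
Definition bidx (s : seq bool) : nat := foldr (fun (b : bool) (n : nat) => (b + n.*2)%N) 0%N s.

Definition chk (P : (nat -> int) -> int) (tab : seq (seq int)) (bs : seq bool) : bool :=
  let p := nth 0 (map bz bs) in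
  ((P p %% 2)%Z == 1) ==>
  (let r := nth 0 (nth [::] tab (bidx bs)) in
   (P r == -1) && all (fun k => ((r k - p k) %% 2)%Z == 0) (iota 0 (size bs))).

Lemma chkK_ok b0 b1 b2 b3 : chk (@PK _) tabKl [:: b0; b1; b2; b3].
Proof. by case: b0; case: b1; case: b2; case: b3; vm_compute. Qed.

Lemma chkE_ok b0 b1 b2 b3 b4 b5 b6 b7 : chk (@PE _) tabEl [:: b0; b1; b2; b3; b4; b5; b6; b7].
Proof. by case: b0; case: b1; case: b2; case: b3; case: b4; case: b5; case: b6; case: b7; vm_compute. Qed.


Lemma finK (f : nat -> int) m : PK f = 2 * m + 1 ->
  exists r : nat -> int, PK r = -1 /\ forall k, (k < 4)%N -> r k = f k + 2 * ((r k - f k) %/ 2)%Z.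
Proof.
move=> Hodd.
have [p [s [Hp Hf]]] : exists p s : nat -> int, (forall k, (p k = 0 \/ p k = 1)) /\ forall k, f k = s k * 2 + p k.
  exists (fun k => (f k %% 2)%Z), (fun k => (f k %/ 2)%Z); split=> k; [lia| exact: divz_eq].
have Hq : PK f = PK p + 2 * (PK (fun k => p k + s k) - PK p - PK s) + 4 * PK s.
  by rewrite /PK !Hf; ring.
have Hb k : p k = bz (p k != 0) by case: (Hp k) => ->.
have := chkK_ok (p 0%N != 0) (p 1%N != 0) (p 2%N != 0) (p 3%N != 0).
rewrite /chk /=.
set r := nth 0 (nth [::] tabKl _).
rewrite /PK /= -!Hb.
move: Hodd; rewrite Hq {1}/PK => Hodd.
have -> : ((p 0%N * p 1%N + p 2%N * p 3%N) %% 2)%Z == 1 by lia.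
move=> /= /andP [/eqP Hr H].
exists r; split=> //.
move: H; rewrite !andbT => /and4P [/eqP H0 /eqP H1 /eqP H2 /eqP H3].
case=> [|[|[|[|//]]]] _; rewrite Hf; lia.
Qed.

Lemma finE (f : nat -> int) m : PE f = 2 * m + 1 ->
  exists r : nat -> int, PE r = -1 /\ forall k, (k < 8)%N -> r k = f k + 2 * ((r k - f k) %/ 2)%Z.
Proof.
move=> Hodd.
have [p [s [Hp Hf]]] : exists p s : nat -> int, (forall k, (p k = 0 \/ p k = 1)) /\ forall k, f k = s k * 2 + p k.
  exists (fun k => (f k %% 2)%Z), (fun k => (f k %/ 2)%Z); split=> k; [lia| exact: divz_eq].
have Hq : PE f = PE p + 2 * (PE (fun k => p k + s k) - PE p - PE s) + 4 * PE s.
  by rewrite /PE !Hf; ring.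
have Hb k : p k = bz (p k != 0) by case: (Hp k) => ->.
have := chkE_ok (p 0%N != 0) (p 1%N != 0) (p 2%N != 0) (p 3%N != 0)
  (p 4%N != 0) (p 5%N != 0) (p 6%N != 0) (p 7%N != 0).
rewrite /chk.
set r := nth 0 (nth [::] tabEl _). clearbody r.
have HP : PE (nth 0 (map bz [:: p 0%N != 0; p 1%N != 0; p 2%N != 0; p 3%N != 0;
  p 4%N != 0; p 5%N != 0; p 6%N != 0; p 7%N != 0])) = PE p by rewrite /PE /= -!Hb.
rewrite HP.
have -> : ((PE p) %% 2)%Z == 1.
  move: Hodd; rewrite Hq. set A := PE p. set B := PE (fun k => _). set C := PE s. lia.
move=> /= /andP [/eqP Hr H].
exists r; split=> //.
move: H; rewrite -!Hb !andbT => /and4P [/eqP H0 /eqP H1 /eqP H2 /andP [/eqP H3 /and4P [/eqP H4 /eqP H5 /eqP H6 /eqP H7]]].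
case=> [|[|[|[|[|[|[|[|//]]]]]]]] _; rewrite Hf; lia.
Qed.

Definition ent (R : Type) n (c : 'rV[R]_n.+1) (k : nat) : R := c 0 (inord k).
Lemma entE (R : Type) n (c : 'rV[R]_n.+1) (o : 'I_n.+1) : c 0 o = ent c o.
Proof. by rewrite /ent inord_val. Qed.
Lemma entZ n (a : rat) (v : 'rV[int]_n.+1) k : ent (a *: map_mx intQ v) k = a * intQ (ent v k).
Proof. by rewrite /ent !mxE. Qed.
Lemma entR n (f : nat -> int) k : (k < n.+1)%N -> ent (\row_(i < n.+1) f i) k = f k.
Proof. by move=> Hk; rewrite /ent mxE inordK. Qed.

Lemma K1 (c : 'rV[rat]_4) :
  (c *m map_mx intQ gramU2U2 *m c^T) 0 0 = 4 * PK (ent c).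
Proof.
rewrite !mxE !big_ord_recr !big_ord0 /= !mxE !big_ord_recr !big_ord0 /= !mxE.
rewrite !entE /= /intQ /PK.
ring.
Qed.

Lemma E1 (c : 'rV[rat]_8) :
  (c *m map_mx intQ gramE8_2 *m c^T) 0 0 = 4 * PE (ent c).
Proof.
rewrite !mxE !big_ord_recr !big_ord0 /= !mxE !big_ord_recr !big_ord0 /= !mxE.
rewrite !entE /= /intQ /PE /e8_entry /e8_edge /=.
rewrite ?(intrM, intrN). ring.
Qed.


Lemma mapM m n p (A : 'M[int]_(m,n)) (B : 'M[int]_(n,p)) :
  map_mx intQ (A *m B) = map_mx intQ A *m map_mx intQ B.
Proof. exact: map_mxM. Qed.

Lemma mapS n (a : int) : map_mx intQ (a%:M : 'M_n) = (intQ a)%:M.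
Proof. exact: map_scalar_mx. Qed.

Lemma bfE m n (B1 : 'M[int]_(m,12)) (B2 : 'M[int]_(n,12)) a b :
  bf (a *m map_mx intQ B1) (b *m map_mx intQ B2) =
  (a *m map_mx intQ (B1 *m gramL *m B2^T) *m b^T) 0 0.
Proof. by rewrite /bf !mapM trmx_mul map_trmx !mulmxA. Qed.

Lemma bfDl x y z : bf (x + y) z = bf x z + bf y z.
Proof. by rewrite /bf !mulmxDl mxE. Qed.
Lemma bfDr x y z : bf x (y + z) = bf x y + bf x z.
Proof. by rewrite /bf linearD /= mulmxDr mxE. Qed.

Lemma gram_entry_sym i j : gram_entry i j = gram_entry j i.
Proof.
rewrite /gram_entry (andbC (j < 2)%N) (andbC (2 <= j < 4)%N) (andbC (4 <= j)%N)
  (eq_sym j i) /e8_entry (eq_sym (j - 4)%N) /e8_edge.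
by rewrite (orbC (((j - 4)%N, (i - 4)%N) \in _)).
Qed.

Lemma gramL_sym : gramL^T = gramL.
Proof. by apply/matrixP => i j; rewrite !mxE gram_entry_sym. Qed.

Lemma bfC x y : bf x y = bf y x.
Proof.
rewrite /bf.
have -> : (x *m map_mx intQ gramL *m y^T) 0 0 = ((x *m map_mx intQ gramL *m y^T)^T) 0 0
  by rewrite [RHS]mxE.
by rewrite !trmx_mul trmxK map_trmx gramL_sym mulmxA.
Qed.

Lemma entry_delta m n (A : 'M[rat]_(m.+1,n.+1)) j i :
  (delta_mx (0 : 'I_1) j *m A *m (delta_mx (0 : 'I_1) i)^T) 0 0 = A j i.
Proof. by rewrite trmx_delta -rowE -colE !mxE. Qed.

Lemma mapdelta m n (i : 'I_m) (j : 'I_n) : map_mx intQ (delta_mx i j) = delta_mx i j.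
Proof. exact: map_delta_mx. Qed.

Lemma Zspan_delta n (B : 'M[int]_(n.+1,12)) j : inZspan B (delta_mx 0 j *m map_mx intQ B).
Proof. by exists (delta_mx 0 j); rewrite mapM mapdelta. Qed.

Lemma dual_half n (B : 'M[int]_(n.+1,12)) (Gr Gi : 'M[int]_n.+1) x :
  B *m gramL *m B^T = Gr -> Gr *m Gi = 2%:M -> inDual B x ->
  exists v : 'rV[int]_n.+1, x = (2^-1 *: map_mx intQ v) *m map_mx intQ B.
Proof.
move=> HG HI [[c ->] Hd].
have Hw j : (c *m map_mx intQ Gr) 0 j \is a Num.int.
  have := Hd _ (Zspan_delta B j).
  by rewrite bfE HG trmx_delta -colE !mxE.
have H2 : 2 *: c = (c *m map_mx intQ Gr) *m map_mx intQ Gi.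
  by rewrite -mulmxA -mapM HI mapS mul_mx_scalar.
have Hi j : (2 *: c) 0 j \is a Num.int.
  rewrite H2 mxE; apply: rpred_sum => k _; apply: rpredM; first exact: Hw.
  by rewrite mxE; exact: intr_int.
exists (\row_j Num.floor ((2 *: c) 0 j)).
have -> : map_mx intQ (\row_j Num.floor ((2 *: c) 0 j)) = 2 *: c.
  apply/rowP => j; rewrite !mxE /intQ.
  by have := Hi j; rewrite intrEfloor mxE => /eqP.
by rewrite scalerA mulVf ?scale1r.
Qed.

Lemma dualDZ n (B : 'M[int]_(n,12)) x k : inDual B x -> inZspan B k -> inDual B (x + k).
Proof.
move=> [[c ->] Hd] [t ->]; split.
  by exists (c + map_mx intQ t); rewrite mulmxDl mapM.
move=> y Hy; rewrite bfDl; apply: rpredD; first exact: Hd.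
case: Hy => [s ->]; rewrite !mapM bfE map_trmx -!mapM mxE; exact: intr_int.
Qed.

Lemma cross (BK : 'M[int]_(4,12)) (BE : 'M[int]_(8,12)) :
  (forall x, inZspan BE x -> inOrthLambda BK x) ->
  forall a b, bf (a *m map_mx intQ BE) (b *m map_mx intQ BK) = 0.
Proof.
move=> H a b; rewrite bfE.
suff -> : map_mx intQ (BE *m gramL *m BK^T) = 0 by rewrite mulmx0 mul0mx mxE.
apply/matrixP => j i; rewrite [RHS]mxE.
have [_ Ho] := H _ (Zspan_delta BE j).
have := Ho _ (Zspan_delta BK i).
by rewrite bfE entry_delta.
Qed.
Definition GUinv : 'M[int]_4 :=
  \matrix_(i, j) (if ((i < 2) && (j < 2))%N || ((2 <= i) && (2 <= j))%N then
                     (if i != j then 1 else 0) else 0).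
Definition Minv : 'M[int]_8 := \matrix_(i, j) nth 0 (nth [::] MinvL i) j.

Lemma GU_inv : gramU2U2 *m GUinv = 2%:M.
Proof.
apply/matrixP => i j; rewrite !mxE !big_ord_recr !big_ord0 /= !mxE.
by case: i => [[|[|[|[|//]]]] Hi]; case: j => [[|[|[|[|//]]]] Hj].
Qed.

Lemma GE_inv : gramE8_2 *m Minv = 2%:M.
Proof.
apply/matrixP => i j; rewrite !mxE !big_ord_recr !big_ord0 /= !mxE /e8_entry /e8_edge /=.
by case: i => [[|[|[|[|[|[|[|[|//]]]]]]]] Hi]; case: j => [[|[|[|[|[|[|[|[|//]]]]]]]] Hj].
Qed.
Definition Hh : 'M[int]_12 := \matrix_(i, j)
  (if (i < j)%N then gram_entry i j else if i == j then (if (4 <= i)%N then -2 else 0) else 0).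

Lemma gramL_H : gramL = Hh + Hh^T.
Proof.
apply/matrixP => i j; rewrite !mxE.
case: (ltngtP i j) => Hij.
- by rewrite -val_eqE /= gtn_eqF // addr0.
- by rewrite -val_eqE /= gtn_eqF // add0r gram_entry_sym.
- have -> : i = j by apply: val_inj.
  rewrite eqxx.
  by clear Hij; case: j => [[|[|[|[|[|[|[|[|[|[|[|[|//]]]]]]]]]]]] Hj].
Qed.

Lemma Leven (x : 'rV[int]_12) : exists m : int, (x *m gramL *m x^T) 0 0 = 2 * m.
Proof.
exists ((x *m Hh *m x^T) 0 0).
rewrite gramL_H mulmxDr mulmxDl mxE mulr_natl mulr2n.
congr (_ + _).
have -> : x *m Hh^T *m x^T = (x *m Hh *m x^T)^T by rewrite !trmx_mul trmxK mulmxA.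
by rewrite [LHS]mxE.
Qed.

Lemma Zspan0 n (B : 'M[int]_(n,12)) : inZspan B 0.
Proof. by exists 0; rewrite mul0mx; apply/matrixP => i j; rewrite !mxE. Qed.

Lemma Lambda_even x : inLambda x -> exists m : int, bf x x = intQ (2 * m).
Proof.
move=> Hx.
have Ex : x = map_mx intQ (\row_i Num.floor (x 0 i)).
  apply/rowP => i; rewrite !mxE /intQ.
  by have := Hx i; rewrite intrEfloor => /eqP.
have [m Hm] := Leven (\row_i Num.floor (x 0 i)).
exists m; rewrite /bf Ex map_trmx -!mapM mxE Hm //.
Qed.

Theorem lemma3p12
  (BK : 'M[int]_(4, 12)) (BE : 'M[int]_(8, 12)) (d1 d2 : 'rV[rat]_12) :
  BK *m gramL *m BK^T = gramU2U2 ->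
  (forall x, inZspan BE x <-> inOrthLambda BK x) ->
  BE *m gramL *m BE^T = gramE8_2 ->
  inDual BK d1 -> ~ inZspan BK d1 ->
  inDual BE d2 -> ~ inZspan BE d2 ->
  (forall x, inLambda x <->
     exists (n : int) (k e : 'rV[rat]_12),
       [/\ inZspan BK k, inZspan BE e & x = intQ n *: (d1 + d2) + k + e]) ->
  odd_type d1 ->
  exists delta : 'rV[rat]_12,
    [/\ inLambda delta, bf delta delta = -2 &
      exists dK dE : 'rV[rat]_12,
        [/\ inDual BK dK, inDual BE dE, delta = dK + dE,
            bf dK dK = -1 & bf dE dE = -1]].
Proof.
move=> HK Horth HE Hd1 _ Hd2 _ HL [m Hodd].
have [v1 Ed1] := dual_half HK GU_inv Hd1.
have [v2 Ed2] := dual_half HE GE_inv Hd2.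
have Hcross a b : bf (a *m map_mx intQ BE) (b *m map_mx intQ BK) = 0.
  by apply: cross => x Hx; apply/Horth.
have Hcross' a b : bf (a *m map_mx intQ BK) (b *m map_mx intQ BE) = 0.
  by rewrite bfC Hcross.
have NK : forall w : 'rV[int]_4, bf ((2^-1 *: map_mx intQ w) *m map_mx intQ BK)
    ((2^-1 *: map_mx intQ w) *m map_mx intQ BK) = intQ (PK (ent w)).
  move=> w.
  rewrite bfE HK K1 /PK !entZ /intQ !(intrD, intrM); field; done.
have NE : forall w : 'rV[int]_8, bf ((2^-1 *: map_mx intQ w) *m map_mx intQ BE)
    ((2^-1 *: map_mx intQ w) *m map_mx intQ BE) = intQ (PE (ent w)).
  move=> w.
  rewrite bfE HE E1 /PE !entZ /intQ !(intrD, intrM, intrN); field; done.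
have Hv1 : PK (ent v1) = 2 * m + 1.
  by apply: (@intr_inj rat); rewrite -/(intQ _) -NK -Ed1.
have Ld : inLambda (d1 + d2).
  apply/HL; exists 1, 0, 0; split; try exact: Zspan0.
  by rewrite (_ : intQ 1 = 1) // scale1r !addr0.
have [m' Hm'] := Lambda_even Ld.
have Hv2 : PE (ent v2) = 2 * (m' - m - 1) + 1.
  apply: (@intr_inj rat); rewrite -/(intQ _).
  have X12 : bf d1 d2 = 0 by rewrite Ed1 Ed2 Hcross'.
  have X21 : bf d2 d1 = 0 by rewrite Ed1 Ed2 Hcross.
  have N1 : bf d1 d1 = intQ (PK (ent v1)) by rewrite Ed1 NK.
  have N2 : bf d2 d2 = intQ (PE (ent v2)) by rewrite Ed2 NE.
  move: Hm'; rewrite !bfDl !bfDr X12 X21 N1 N2 Hv1 /intQ !(intrD, intrM, intrN) => Hm'.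
  lra.
have [r1 [Hr1 Hc1]] := finK Hv1.
have [r2 [Hr2 Hc2]] := finE Hv2.
pose tK := \row_(i < 4) ((r1 i - ent v1 i) %/ 2)%Z.
pose tE := \row_(i < 8) ((r2 i - ent v2 i) %/ 2)%Z.
pose dK := (2^-1 *: map_mx intQ (\row_(i < 4) r1 i)) *m map_mx intQ BK.
pose dE := (2^-1 *: map_mx intQ (\row_(i < 8) r2 i)) *m map_mx intQ BE.
have EK : dK = d1 + map_mx intQ (tK *m BK).
  rewrite /dK Ed1 mapM -mulmxDl; congr (_ *m _); apply/rowP => i; rewrite !mxE.
  set t := ((r1 i - _) %/ 2)%Z.
  rewrite (Hc1 i (ltn_ord i)) -/t entE /intQ intrD intrM; field; done.
have EE : dE = d2 + map_mx intQ (tE *m BE).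
  rewrite /dE Ed2 mapM -mulmxDl; congr (_ *m _); apply/rowP => i; rewrite !mxE.
  set t := ((r2 i - _) %/ 2)%Z.
  rewrite (Hc2 i (ltn_ord i)) -/t entE /intQ intrD intrM; field; done.
have NdK : bf dK dK = -1.
  rewrite /dK NK (_ : PK _ = PK r1) ?Hr1 //.
  by rewrite /PK !entR.
have NdE : bf dE dE = -1.
  rewrite /dE NE (_ : PE _ = PE r2) ?Hr2 //.
  by rewrite /PE !entR.
have C1 : bf dK dE = 0 by rewrite /dK /dE Hcross'.
have C2 : bf dE dK = 0 by rewrite /dK /dE Hcross.
exists (dK + dE); split.
- apply/HL; exists 1, (map_mx intQ (tK *m BK)), (map_mx intQ (tE *m BE)).
  split; [by exists tK | by exists tE |].
  rewrite EK EE (_ : intQ 1 = 1) // scale1r -!addrA; congr (_ + _).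
  by rewrite addrCA.
- by rewrite !bfDl !bfDr NdK NdE C1 C2 addr0 add0r.
- exists dK, dE; split => //.
  + by rewrite EK; apply: dualDZ => //; exists tK.
  + by rewrite EE; apply: dualDZ => //; exists tE.
Qed.
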